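(* Let $F$ be any finite set of points with rational coordinates lying on the unit circle $x^2+y^2=1$ (for instance, $100$ such points), and consider the configuration consisting of the points of $F$ and the line $y=x$ (the circle itself is not part of the configuration). Then the two intersection points $\pm\left(\frac{\sqrt2}{2},\frac{\sqrt2}{2}\right)$ of the line $y=x$ with the unit circle are non-constructible by a straightedge from this configuration.
   Context: A configuration is a finite collection of points $a_i\in\mathbb R^2$, lines $\ell_i\subset\mathbb R^2$ and curves $\gamma_i\subset\mathbb R^2$. Given a configuration $\{a_i,\ell_i,\gamma_i\}$, call a set $\Sigma\subset\mathbb R^2$ admissible if: (1) $\Sigma$ is dense in $\mathbb R^2$; (2) every $a_i$ lies in $\Sigma$; (3) for any $b_1,b_2,b_3,b_4\in\Sigma$ with $b_1\neq b_2$, $b_3\ne b_4$, if the lines $b_1b_2$ and $b_3b_4$ are distinct and not parallel, then their intersection point lies in $\Sigma$; (4) for any distinct $b_1,b_2\in\Sigma$, every isolated intersection point of the line $b_1b_2$ with any of the lines $\ell_i$ or curves $\gamma_j$ lies in $\Sigma$. A point $a$ is non-constructible (by a straightedge) from the configuration if there exists an admissible set $\Sigma$ with $a\notin\Sigma$. *)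

(* Defs.v *)
From Stdlib Require Import Reals List QArith Qreals.
Open Scope R_scope.

Definition point : Type := (R * R)%type.

Definition cross (a b c d : point) : R :=
  (fst b - fst a) * (snd d - snd c) - (snd b - snd a) * (fst d - fst c).

(* p lies on the line through a and b (meaningful when a <> b) *)
Definition on_line2 (a b p : point) : Prop := cross a b a p = 0.

Record eqline : Type := mkEqline { lu : R; lv : R; lw : R; lnz : lu <> 0 \/ lv <> 0 }.
Definition on_eqline (l : eqline) (p : point) : Prop :=
  lu l * fst p + lv l * snd p = lw l.

Record config : Type := mkConfig {
  cpoints : list point;
  clines  : list eqline;
  ccurves : list (point -> Prop) }.

Definition dist2 (p q : point) : R := (fst p - fst q)^2 + (snd p - snd q)^2.

Definition isolated_in (S : point -> Prop) (p : point) : Prop :=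
  S p /\ exists eps, 0 < eps /\ forall q, S q -> dist2 p q < eps -> q = p.

Definition admissible (C : config) (Sig : point -> Prop) : Prop :=
  (forall x eps, 0 < eps -> exists p, Sig p /\ dist2 p x < eps) /\
  (forall a, In a (cpoints C) -> Sig a) /\
  (forall b1 b2 b3 b4 p, Sig b1 -> Sig b2 -> Sig b3 -> Sig b4 ->
     b1 <> b2 -> b3 <> b4 -> cross b1 b2 b3 b4 <> 0 ->
     on_line2 b1 b2 p -> on_line2 b3 b4 p -> Sig p) /\
  (forall b1 b2 p, Sig b1 -> Sig b2 -> b1 <> b2 ->
     ((exists l, In l (clines C) /\
         isolated_in (fun q => on_line2 b1 b2 q /\ on_eqline l q) p) \/
      (exists g, In g (ccurves C) /\
         isolated_in (fun q => on_line2 b1 b2 q /\ g q) p)) ->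
     Sig p).

Definition non_constructible (C : config) (a : point) : Prop :=
  exists Sig, admissible C Sig /\ ~ Sig a.

Definition is_rational (x : R) : Prop := exists q : Q, x = Q2R q.

Lemma diag_nz : (1 <> 0 \/ -1 <> 0)%R.
Proof. left; exact R1_neq_R0. Qed.

(* the line y = x, i.e. 1*x + (-1)*y = 0 *)
Definition diag_line : eqline := mkEqline 1 (-1) 0 diag_nz.

(* Main.v *)
Require Import Defs.
From Stdlib Require Import Reals List QArith Qreals Lra Lia Psatz ZArith Znumtheory.
Open Scope R_scope.

Lemma Q2R0 : Q2R 0 = 0. Proof. unfold Q2R; simpl; field. Qed.

Lemma rat_plus x y : is_rational x -> is_rational y -> is_rational (x+y).
Proof. intros [a ->] [b ->]; exists (a+b)%Q; now rewrite Q2R_plus. Qed.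
Lemma rat_mult x y : is_rational x -> is_rational y -> is_rational (x*y).
Proof. intros [a ->] [b ->]; exists (a*b)%Q; now rewrite Q2R_mult. Qed.
Lemma rat_opp x : is_rational x -> is_rational (-x).
Proof. intros [a ->]; exists (-a)%Q; now rewrite Q2R_opp. Qed.
Lemma rat_minus x y : is_rational x -> is_rational y -> is_rational (x-y).
Proof. intros [a ->] [b ->]; exists (a-b)%Q; now rewrite Q2R_minus. Qed.
Lemma rat_div x y : is_rational x -> is_rational y -> y <> 0 -> is_rational (x/y).
Proof. intros [a ->] [b ->] H; exists (a/b)%Q. unfold Qdiv, Rdiv.
  rewrite Q2R_mult, Q2R_inv; auto. intro E; apply H; rewrite <- Q2R0; now apply Qeq_eqR. Qed.
Lemma rat_IZR z : is_rational (IZR z).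
Proof. exists (inject_Z z). unfold Q2R; simpl; field. Qed.

Lemma no_sqrt2 : forall m : nat, forall n d : Z, (0 < d)%Z -> (Z.to_nat d <= m)%nat ->
  (n*n*2 = d*d)%Z -> False.
Proof.
  induction m; intros n d Hd Hm H; [lia|].
  assert (Ed : Z.even d = true).
  { assert (Z.even (d*d) = true) by (rewrite <- H, Z.even_mul, Bool.orb_true_r; reflexivity).
    rewrite Z.even_mul in H0; destruct (Z.even d); auto. }
  apply Z.even_spec in Ed; destruct Ed as [k Hk]; subst d.
  assert (En : Z.even n = true).
  { assert (Z.even (n*n) = true).
    { replace (n*n)%Z with (2*(k*k))%Z by nia. rewrite Z.even_mul; reflexivity. }
    rewrite Z.even_mul in H0; destruct (Z.even n); auto. }
  apply Z.even_spec in En; destruct En as [j Hj]; subst n.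
  apply (IHm j k); [lia|lia|nia].
Qed.

Lemma not_rat_s2 : ~ is_rational (sqrt 2 / 2).
Proof.
  intros [[n d] Hq]. unfold Q2R in Hq; simpl in Hq.
  assert (H2 : sqrt 2 * sqrt 2 = 2) by (apply sqrt_sqrt; lra).
  assert (Hd : IZR (Z.pos d) > 0) by (apply IZR_lt; lia).
  assert (E : IZR n * IZR n * 2 = IZR (Z.pos d) * IZR (Z.pos d)).
  { assert (H : sqrt 2 = 2 * (sqrt 2 / 2)) by field. rewrite Hq in H.
    rewrite H in H2. set (u := IZR n * / IZR (Z.pos d)) in *.
    assert (Hn : IZR n = u * IZR (Z.pos d)) by (unfold u; field; lra).
    rewrite Hn. nra. }
  rewrite <- !mult_IZR in E. apply eq_IZR in E.
  apply (no_sqrt2 (Z.to_nat (Z.pos d)) n (Z.pos d)); lia.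
Qed.

Definition ratp (p : point) := is_rational (fst p) /\ is_rational (snd p).

Ltac rat := repeat first [ apply rat_plus | apply rat_minus | apply rat_mult | apply rat_opp | assumption ].

Lemma inter_rat b1 b2 b3 b4 p : ratp b1 -> ratp b2 -> ratp b3 -> ratp b4 ->
  cross b1 b2 b3 b4 <> 0 -> on_line2 b1 b2 p -> on_line2 b3 b4 p -> ratp p.
Proof.
  destruct b1 as [x1 y1], b2 as [x2 y2], b3 as [x3 y3], b4 as [x4 y4], p as [px py].
  unfold ratp, on_line2, cross; simpl.
  intros [r1 s1] [r2 s2] [r3 s3] [r4 s4] HD E1 E2.
  set (D := (x2 - x1) * (y4 - y3) - (y2 - y1) * (x4 - x3)) in *.
  set (A1 := -(y2-y1)). set (B1 := x2-x1). set (C1 := (x2-x1)*y1 - (y2-y1)*x1).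
  set (A2 := -(y4-y3)). set (B2 := x4-x3). set (C2 := (x4-x3)*y3 - (y4-y3)*x3).
  assert (Hx : px = (C1*B2 - C2*B1)/D).
  { apply (Rmult_eq_reg_r D); [|auto]. unfold Rdiv. rewrite Rmult_assoc, Rinv_l; [|auto].
    apply Rminus_diag_uniq. 
    replace (px * D - (C1 * B2 - C2 * B1) * 1) with
      (B2 * ((x2 - x1) * (py - y1) - (y2 - y1) * (px - x1)) - B1 * ((x4 - x3) * (py - y3) - (y4 - y3) * (px - x3)))
      by (unfold D, B1, B2, C1, C2; ring).
    rewrite E1, E2; ring. }
  assert (Hy : py = (A1*C2 - A2*C1)/D).
  { apply (Rmult_eq_reg_r D); [|auto]. unfold Rdiv. rewrite Rmult_assoc, Rinv_l; [|auto].
    apply Rminus_diag_uniq. 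
    replace (py * D - (A1 * C2 - A2 * C1) * 1) with
      (- A2 * ((x2 - x1) * (py - y1) - (y2 - y1) * (px - x1)) + A1 * ((x4 - x3) * (py - y3) - (y4 - y3) * (px - x3)))
      by (unfold D, A1, A2, C1, C2; ring).
    rewrite E1, E2; ring. }
  rewrite Hx, Hy; split; apply rat_div; auto; unfold D, A1, A2, B1, B2, C1, C2; rat.
Qed.

Lemma approx r N : IZR N > 1 -> exists q, is_rational q /\ (q - r)^2 <= / IZR N.
Proof.
  intros HN. destruct (archimed (r * IZR N)) as [H1 H2].
  exists (IZR (up (r * IZR N)) / IZR N). split.
  - apply rat_div; [apply rat_IZR|apply rat_IZR|lra].
  - set (u := IZR (up (r * IZR N))) in *.
    assert (He : u / IZR N - r = (u - r * IZR N) / IZR N) by (field; lra).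
    rewrite He. assert (Ht0 : 0 < u - r * IZR N) by lra. assert (Ht1 : u - r * IZR N <= 1) by lra.
    set (t := u - r * IZR N) in *.
    assert (0 < t / IZR N) by (apply Rdiv_lt_0_compat; lra).
    assert (t / IZR N <= / IZR N) by (assert (0 < / IZR N) by (apply Rinv_0_lt_compat; lra); unfold Rdiv; nra).
    assert (/ IZR N < 1) by (rewrite <- Rinv_1; apply Rinv_lt_contravar; lra).
    set (s := t / IZR N) in *. assert (s * s <= s * 1) by (apply Rmult_le_compat_l; lra). simpl; lra.
Qed.

Lemma dense_rat x eps : 0 < eps -> exists p, ratp p /\ dist2 p x < eps.
Proof.
  intros He. destruct (archimed (2/eps + 1)) as [H1 _].
  set (N := up (2 / eps + 1)) in *.
  assert (HN : IZR N > 1) by (assert (2/eps > 0) by (apply Rdiv_lt_0_compat; lra); lra).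
  destruct (approx (fst x) N HN) as [q1 [R1 E1]].
  destruct (approx (snd x) N HN) as [q2 [R2 E2]].
  exists (q1, q2); split; [split; auto|]. unfold dist2; simpl.
  assert (2 / IZR N < eps).
  { apply (Rmult_lt_reg_r (IZR N)); [lra|]. unfold Rdiv; rewrite Rmult_assoc, Rinv_l by lra.
    assert (2 / eps * eps = 2) by (field; lra). nra. }
  unfold Rdiv in H. lra.
Qed.

Lemma iso_rat b1 b2 p : ratp b1 -> ratp b2 -> b1 <> b2 ->
  isolated_in (fun q => on_line2 b1 b2 q /\ on_eqline diag_line q) p -> ratp p.
Proof.
  intros r1 r2 Hne [[Hl Hd] [eps [Heps Hiso]]].
  destruct (Req_dec (cross b1 b2 (0,0) (1,1)) 0) as [Hc|Hc].
  - exfalso. set (d := Rmin 1 (eps/4)).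
    assert (d > 0) by (unfold d; apply Rmin_glb_lt; lra).
    assert (d <= 1) by apply Rmin_l. assert (d <= eps/4) by apply Rmin_r.
    assert (E : (fst p + d, snd p + d) = p).
    { apply Hiso.
      - destruct b1 as [x1 y1], b2 as [x2 y2], p as [px py].
        unfold on_line2, on_eqline, cross in *; simpl in *. split.
        + replace ((x2 - x1) * (py + d - y1) - (y2 - y1) * (px + d - x1)) with
            (((x2 - x1) * (py - y1) - (y2 - y1) * (px - x1)) + d * ((x2 - x1) * (1 - 0) - (y2 - y1) * (1 - 0))) by ring.
          rewrite Hl, Hc; ring.
        + lra.
      - unfold dist2; simpl. nra. }
    destruct p as [px py]; simpl in E. injection E; lra.
  - apply (inter_rat b1 b2 (0,0) (1,1) p); auto.
    + split; exists 0%Q; unfold Q2R; simpl; field.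
    + split; exists 1%Q; unfold Q2R; simpl; field.
    + destruct p as [px py]; unfold on_line2, on_eqline, cross in *; simpl in *. lra.
Qed.

Theorem mainTheorem8 (F : list point) :
  (forall p, In p F ->
     is_rational (fst p) /\ is_rational (snd p) /\ (fst p)^2 + (snd p)^2 = 1) ->
  non_constructible (mkConfig F (diag_line :: nil) nil) (sqrt 2 / 2, sqrt 2 / 2) /\
  non_constructible (mkConfig F (diag_line :: nil) nil) (- (sqrt 2 / 2), - (sqrt 2 / 2)).
Proof.
  intros HF.
  assert (Ad : admissible (mkConfig F (diag_line :: nil) nil) ratp).
  { split; [|split; [|split]].
    - intros; now apply dense_rat.
    - intros a Ha; simpl in Ha. destruct (HF a Ha) as [? [? _]]; split; auto.
    - intros b1 b2 b3 b4 p ? ? ? ? _ _ Hc H1 H2. apply (inter_rat b1 b2 b3 b4 p); auto.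
    - intros b1 b2 p r1 r2 Hne [[l [Hl Hi]] | [g [Hg _]]].
      + simpl in Hl. destruct Hl as [<- | []]. apply (iso_rat b1 b2 p); auto.
      + simpl in Hg; destruct Hg. }
  split; exists ratp; split; auto; intros [H _]; simpl in H.
  - now apply not_rat_s2.
  - apply not_rat_s2. replace (sqrt 2 / 2) with (- - (sqrt 2 / 2)) by ring. now apply rat_opp.
Qed.
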